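(* Let $\nu$ be a signature and let $\mathcal A\in\widetilde{\mathrm{Hinge}}_n$ be nondegenerate. Then $\rho_\nu(\mathcal A)\ne0$.
   Context: Let $V=\mathbb C^n$ with basis $e_1,\dots,e_n$. A linear relation is a subspace $P\subset V\oplus V$; $\mathrm{Ker}\,P=\{v: v\oplus0\in P\}$, $\mathrm{Dom}\,P,\mathrm{Im}\,P$ the projections to the first and second summands, $\mathrm{Indef}\,P=\{w:0\oplus w\in P\}$, $\mathrm{rk}\,P=\dim\mathrm{Dom}\,P-\dim\mathrm{Ker}\,P$. If $\dim P=n$, choose bases $f_1,\dots,f_a,g_1,\dots,g_b,h_1,\dots,h_c$ and $F_1,\dots,F_a,G_1,\dots,G_b,H_1,\dots,H_c$ of $V$ with $P$ spanned by $0\oplus F_i$, $g_j\oplus G_j$, $h_k\oplus0$; $\lambda(P)$ maps $f_1\wedge\dots\wedge f_a\wedge g_{i_1}\wedge\dots\wedge g_{i_s}$ to $F_1\wedge\dots\wedge F_a\wedge G_{i_1}\wedge\dots\wedge G_{i_s}$ and kills the other basis monomials (up to scalar); $\lambda^m(P)$ its restriction to $\Lambda^mV$. A hinge is a sequence $\mathcal P=(P_1,\dots,P_k)$ of $n$-dimensional relations with $\mathrm{Ker}\,P_j=\mathrm{Dom}\,P_{j+1}$, $\mathrm{Im}\,P_j=\mathrm{Indef}\,P_{j+1}$, $\mathrm{Dom}\,P_1=V$, $\mathrm{Im}\,P_k=V$, $\mathrm{rk}\,P_j>0$. For each $m$ there is a nonzero $\lambda^m(P_j)$, and any two nonzero ones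 are proportional; $\lambda^m(\mathcal P)$ denotes it (up to scalar). $\widetilde{\mathrm{Hinge}}_n$ is the set of tuples $\mathcal A=(c_0\lambda^0(\mathcal P),\dots,c_n\lambda^n(\mathcal P))$ with $\mathcal P$ a hinge and $c_j\in\mathbb C$; $\mathcal A$ is nondegenerate if all $c_j\ne0$. A signature is $\nu_1\ge\dots\ge\nu_n\ge0$ (integers), $\nu_{n+1}=0$; $\mathfrak H_\nu=\bigotimes_j(\Lambda^jV)^{\otimes(\nu_j-\nu_{j+1})}$; $\Xi_\nu=\bigotimes_j(e_1\wedge\dots\wedge e_j)^{\otimes(\nu_j-\nu_{j+1})}$; $\mathfrak r_\nu(A_0,\dots,A_n)=\bigotimes_jA_j^{\otimes(\nu_j-\nu_{j+1})}$; $H_\nu$ is the span of $\mathfrak r_\nu(\lambda^0_{\mathrm{cha}}(g),\dots,\lambda^n_{\mathrm{cha}}(g))\Xi_\nu$, $g\in\mathrm{GL}_n(\mathbb C)$, where $\lambda^j_{\mathrm{cha}}(g)v_1\wedge\dots\wedge v_j=gv_1\wedge\dots\wedge gv_j$; $H_\nu$ is invariant under $\mathfrak r_\nu(\mathcal A)$ for $\mathcal A\in\widetilde{\mathrm{Hinge}}_n$, and $\rho_\nu(\mathcal A)$ is the restriction of $\mathfrak r_\nu(\mathcal A)$ to $H_\nu$. *)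

(* Defs.v *)
From HB Require Import structures.
From mathcomp Require Import all_boot all_order all_algebra.
Set Implicit Arguments. Unset Strict Implicit. Unset Printing Implicit Defensive.
Import Order.TTheory GRing.Theory Num.Theory.
Local Open Scope ring_scope.

(* V = F^n with standard basis e_0..e_{n-1}; vectors are row vectors 'rV_n.
   The exterior algebra Lambda V has basis e_I, I : {set 'I_n},
   e_I = e_{i_1} /\ ... /\ e_{i_k} with i_1 < ... < i_k.                    *)

Section Defs.
Variable F : fieldType.
Variable n : nat.

(* vectors of Lambda V (coordinates in the basis e_I) *)
Local Notation Ext := {ffun {set 'I_n} -> F}.
(* linear operators on Lambda V, given by their matrix entries L J I *)
Definition Op := {set 'I_n} -> {set 'I_n} -> F.

Definition scl (T : finType) (c : F) (v : {ffun T -> F}) : {ffun T -> F} :=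
  [ffun x => c * v x].

Definition applyOp (L : Op) (v : Ext) : Ext :=
  [ffun J => \sum_(I : {set 'I_n}) L J I * v I].

Definition inLam (m : nat) (v : Ext) : Prop :=
  forall I : {set 'I_n}, #|I| != m -> v I = 0.

Definition pos (T : {set 'I_n}) (i : 'I_n) : nat :=
  #|[set i' in T | (val i' < val i)%N]|.

(* wedge product of the k rows of M *)
Definition wedge (k : nat) (M : 'M[F]_(k, n)) : Ext :=
  [ffun J : {set 'I_n} => if #|J| == k then
      \det (\matrix_(a < k, b < k) \sum_(j in J | pos J j == b) M a j)
    else 0].

(* the rows of M indexed by T, in increasing order *)
Definition sel (T : {set 'I_n}) (M : 'M[F]_n) : 'M[F]_(#|T|, n) :=
  \matrix_(a < #|T|, j < n) \sum_(i in T | pos T i == a) M i j.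

(* the monomial  b_{t_1} /\ ... /\ b_{t_s}  (t_1 < ... < t_s in T) of the rows of B *)
Definition mono (B : 'M[F]_n) (T : {set 'I_n}) : Ext := wedge (sel T B).

(* ---- linear relations P ⊂ V ⊕ V, given by a spanning family of rows ---- *)
Definition Rel := 'M[F]_(n, n + n).

Definition DomP (P : Rel) : 'M[F]_(n, n) := lsubmx P.
Definition ImP (P : Rel) : 'M[F]_(n, n) := rsubmx P.
(* Ker P = {v | v ⊕ 0 ∈ P} *)
Definition KerP (P : Rel) : 'M[F]_(n + n, n) :=
  lsubmx (P :&: row_mx (1%:M : 'M[F]_n) (0 : 'M[F]_n))%MS.
(* Indef P = {w | 0 ⊕ w ∈ P} *)
Definition IndefP (P : Rel) : 'M[F]_(n + n, n) :=
  rsubmx (P :&: row_mx (0 : 'M[F]_n) (1%:M : 'M[F]_n))%MS.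
Definition rkP (P : Rel) : nat := (\rank (DomP P) - \rank (KerP P))%N.

(* hinge P_1, ..., P_k  (stored as Ps`_0, ..., Ps`_(k-1)) *)
Definition is_hinge (Ps : seq Rel) : Prop :=
  [/\ (0 < size Ps)%N,
      forall j, (j < size Ps)%N -> \rank (nth (0%R : Rel) Ps j) = n,
      forall j, (j.+1 < size Ps)%N ->
        (KerP (nth (0%R : Rel) Ps j) == DomP (nth (0%R : Rel) Ps j.+1))%MS /\ (ImP (nth (0%R : Rel) Ps j) == IndefP (nth (0%R : Rel) Ps j.+1))%MS,
      row_full (DomP (nth (0%R : Rel) Ps 0)) /\ row_full (ImP (nth (0%R : Rel) Ps (size Ps).-1)) &
      forall j, (j < size Ps)%N -> (0 < rkP (nth (0%R : Rel) Ps j))%N].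

(* the relation spanned by 0 ⊕ F_i (i < a), g_j ⊕ G_j (a <= j < a+b),
   h_k ⊕ 0 (a+b <= k), where B has rows f,g,h and C has rows F,G,H *)
Definition adapted (a b : nat) (B C : 'M[F]_n) : Rel :=
  \matrix_(i < n) row_mx (if (i < a)%N then 0 else row i B)
                         (if (i < a + b)%N then row i C else 0).

(* L is (a nonzero multiple of) lambda(P) *)
Definition lam_rep (P : Rel) (L : Op) : Prop :=
  exists (a b : nat) (B C : 'M[F]_n),
    [/\ (a + b <= n)%N, B \in unitmx, C \in unitmx,
        (P == adapted a b B C)%MS &
        exists2 c : F, c != 0 &
          forall T : {set 'I_n},
            applyOp L (mono B T) =
            if ([set i : 'I_n | (i < a)%N] \subset T) &&
               (T \subset [set i : 'I_n | (i < a + b)%N])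
            then scl c (mono C T) else 0].

(* (A_0, ..., A_n) is a nondegenerate element of tilde Hinge_n *)
Definition nondeg_hinge_tuple (A : nat -> Op) : Prop :=
  exists Ps : seq Rel, is_hinge Ps /\
    forall m, (m <= n)%N ->
      exists j, (j < size Ps)%N /\
      exists L : Op, [/\ lam_rep (nth (0%R : Rel) Ps j) L,
        (exists v, inLam m v /\ applyOp L v != 0) &
        exists2 c : F, c != 0 &
          forall v, inLam m v -> applyOp (A m) v = scl c (applyOp L v)].

Definition signature (nu : nat -> nat) : Prop :=
  forall j, (1 <= j)%N -> (j < n)%N -> (nu j.+1 <= nu j)%N.

(* multiplicity nu_j - nu_{j+1} of Lambda^j V, with nu_{n+1} = 0 *)
Definition mult (nu : nat -> nat) (j : nat) : nat :=
  (nu j - (if (j < n)%N then nu j.+1 else 0))%N.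

(* the degrees of the tensor factors of frak h_nu, in order *)
Definition degs (nu : nat -> nat) : seq nat :=
  flatten [seq nseq (mult nu j) j | j <- iota 1 n].

Definition Nf (nu : nat -> nat) : nat := size (degs nu).

(* frak h_nu, with coordinates in the product basis *)
Local Notation Tens nu := {ffun {ffun 'I_(Nf nu) -> {set 'I_n}} -> F}.

Definition rnu (nu : nat -> nat) (A : nat -> Op) (t : Tens nu) : Tens nu :=
  [ffun J : {ffun 'I_(Nf nu) -> {set 'I_n}} => \sum_(I : {ffun 'I_(Nf nu) -> {set 'I_n}})
     (\prod_(k < Nf nu) A (nth 0%N (degs nu) k) (J k) (I k)) * t I].

Definition Xi (nu : nat -> nat) : Tens nu :=
  [ffun I : {ffun 'I_(Nf nu) -> {set 'I_n}} => \prod_(k < Nf nu)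
     (if I k == [set i : 'I_n | (i < (nth 0%N (degs nu) k))%N] then 1 else 0)].

(* lambda_cha(g): e_I |-> /\_{i in I} g e_i  (g e_i = i-th column of g) *)
Definition lamcha (g : 'M[F]_n) : Op :=
  fun J I => wedge (sel I g^T) J.

(* membership in H_nu = span { r_nu(lambda_cha(g)) Xi_nu | g in GL_n } *)
Definition inH (nu : nat -> nat) (h : Tens nu) : Prop :=
  exists s : seq (F * 'M[F]_n),
    (forall p, p \in s -> p.2 \in unitmx) /\
    h = \sum_(p <- s) scl p.1 (rnu (fun _ : nat => lamcha p.2) (Xi nu)).

End Defs.

Notation Ext F n := {ffun {set 'I_n} -> F}.
Notation Tens F n nu := {ffun {ffun 'I_(Nf n nu) -> {set 'I_n}} -> F}.

(* Main.v *)
Require Import Defs.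
From HB Require Import structures.
From mathcomp Require Import all_boot all_order all_algebra.
Import Order.TTheory GRing.Theory Num.Theory.
Local Open Scope ring_scope.
Set Implicit Arguments. Unset Strict Implicit.

Section PF.
Variable F : numClosedFieldType.
Variable n : nat.

Definition pf (phi : 'M[F]_n -> F) := forall a b : 'M[F]_n,
  exists p : {poly F}, forall t : F, phi (a + t *: b) = p.[t].

Lemma pf_const c : pf (fun _ => c).
Proof. by move=> a b; exists c%:P => t; rewrite hornerC. Qed.

Lemma pf_entry i j : pf (fun g => g i j).
Proof.
move=> a b; exists ((a i j)%:P + b i j *: 'X) => t.
by rewrite !mxE hornerD hornerC hornerZ hornerX mulrC.
Qed.

Lemma pf_add f1 f2 : pf f1 -> pf f2 -> pf (fun g => f1 g + f2 g).
Proof.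
move=> h1 h2 a b; have [p Hp] := h1 a b; have [q Hq] := h2 a b.
by exists (p + q) => t; rewrite hornerD Hp Hq.
Qed.

Lemma pf_mul f1 f2 : pf f1 -> pf f2 -> pf (fun g => f1 g * f2 g).
Proof.
move=> h1 h2 a b; have [p Hp] := h1 a b; have [q Hq] := h2 a b.
by exists (p * q) => t; rewrite hornerM Hp Hq.
Qed.

Lemma pf_sum (I : Type) (r : seq I) (P : pred I) (f : I -> 'M[F]_n -> F) :
  (forall i, pf (f i)) -> pf (fun g => \sum_(i <- r | P i) f i g).
Proof.
move=> hf a b; elim: r => [|x r [p Hp]].
  by exists 0 => t; rewrite big_nil horner0.
case Px: (P x).
  have [q Hq] := hf x a b.
  by exists (q + p) => t; rewrite big_cons Px hornerD Hq Hp.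
by exists p => t; rewrite big_cons Px Hp.
Qed.

Lemma pf_prod (I : Type) (r : seq I) (P : pred I) (f : I -> 'M[F]_n -> F) :
  (forall i, pf (f i)) -> pf (fun g => \prod_(i <- r | P i) f i g).
Proof.
move=> hf a b; elim: r => [|x r [p Hp]].
  by exists 1 => t; rewrite big_nil hornerC.
case Px: (P x).
  have [q Hq] := hf x a b.
  by exists (q * p) => t; rewrite big_cons Px hornerM Hq Hp.
by exists p => t; rewrite big_cons Px Hp.
Qed.

Lemma pf_det k (M : 'M[F]_n -> 'M[F]_k) :
  (forall i j, pf (fun g => M g i j)) -> pf (fun g => \det (M g)).
Proof.
move=> hM; rewrite /determinant.
apply: pf_sum => s; apply: pf_mul; first exact: pf_const.
by apply: pf_prod => i; apply: hM.
Qed.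

Lemma nonroot (p : {poly F}) : p != 0 -> exists k : nat, p.[k%:R] != 0.
Proof.
move=> p0.
set rs := [seq (k%:R : F) | k <- iota 0 (size p)].
case: (boolP (all (root p) rs)) => [Hall|].
  have U : uniq rs.
    by rewrite map_inj_uniq ?iota_uniq // => x y /eqP; rewrite eqr_nat => /eqP.
  by have := max_poly_roots p0 Hall U; rewrite size_map size_iota ltnn.
case/allPn => x /mapP [k _ ->] Hk; by exists k.
Qed.

Lemma pf_comb f1 f2 a b : pf f1 -> pf f2 -> f1 a != 0 -> f2 b != 0 ->
  exists c, f1 c * f2 c != 0.
Proof.
move=> h1 h2 n1 n2.
have [p Hp] := h1 a (b - a); have [q Hq] := h2 a (b - a).
have p0 : p != 0.
  by apply: contraNneq n1 => pe; rewrite -(addr0 a) -(scale0r (b - a)) Hp pe horner0.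
have q0 : q != 0.
  apply: contraNneq n2 => qe.
  by rewrite -[b](addrNK a) addrC -[X in a + X](scale1r (b - a)) Hq qe horner0.
have [k Hk] := nonroot (mulf_neq0 p0 q0).
by exists (a + k%:R *: (b - a)); rewrite Hp Hq -hornerM.
Qed.

Lemma pf_all (N : nat) (fs : nat -> 'M[F]_n -> F) :
  (forall i, (i < N)%N -> pf (fs i) /\ exists a, fs i a != 0) ->
  exists g, forall i, (i < N)%N -> fs i g != 0.
Proof.
move=> H.
suff [g Hg] : exists g, \prod_(i < N) fs i g != 0.
  exists g => i iN; apply: contraNneq Hg => e.
  by apply/prodf_eq0; exists (Ordinal iN) => //; rewrite e.
elim: N H => [|N IH] H.
  by exists 0; rewrite big_ord0 oner_eq0.
have [g Hg] := IH (fun i iN => H i (ltnW iN)).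
have [pN [a Ha]] := H N (ltnSn N).
have pP : pf (fun g => \prod_(i < N) fs i g).
  by apply: pf_prod => i; case: (H i (ltnW (ltn_ord i))).
have [c Hc] := pf_comb pP pN Hg Ha.
by exists c; rewrite big_ord_recr.
Qed.

Lemma pf_ext f1 f2 : (forall g, f1 g = f2 g) -> pf f2 -> pf f1.
Proof. by move=> e h a b; have [p Hp] := h a b; exists p => t; rewrite e. Qed.

Lemma card_lt k m : (m <= k)%N -> #|[set i : 'I_k | (i < m)%N]| = m.
Proof.
move=> mk.
have -> : [set i : 'I_k | (i < m)%N] = [set widen_ord mk j | j : 'I_m].
  apply/setP => i; rewrite inE; apply/idP/imsetP => [im | [j _ ->]]; last by rewrite /= ltn_ord.
  by exists (Ordinal im) => //; apply: val_inj.
rewrite card_imset ?card_ord //. move=> x y H. by apply: val_inj; move: (congr1 val H).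
Qed.

Lemma pos_Tm m (i : 'I_n) : (i < m)%N -> (m <= n)%N -> pos [set i0 : 'I_n | (i0 < m)%N] i = i.
Proof.
move=> im mn; rewrite /pos.
have -> : [set i' in [set i0 : 'I_n | (i0 < m)%N] | (i' < i)%N] = [set i' : 'I_n | (i' < i)%N].
  apply/setP => j; rewrite !inE; apply/andb_idl => ji; exact: ltn_trans ji im.
by rewrite card_lt // ltnW.
Qed.

Lemma pos_lt (I : {set 'I_n}) i : i \in I -> (pos I i < #|I|)%N.
Proof.
move=> iI; apply: proper_card; apply/properP; split.
  by apply/subsetP => j; rewrite inE => /andP [].
by exists i => //; rewrite inE ltnn andbF.
Qed.

Lemma pos_mono (I : {set 'I_n}) i j : i \in I -> j \in I -> (i < j)%N -> (pos I i < pos I j)%N.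
Proof.
move=> iI jI ij; apply: proper_card; apply/properP; split.
  apply/subsetP => k; rewrite !inE => /andP [-> ki] /=; exact: ltn_trans ki ij.
by exists i; rewrite !inE ?iI ?ij // ltnn andbF.
Qed.

Lemma pos_inj (I : {set 'I_n}) i j : i \in I -> j \in I -> pos I i = pos I j -> i = j.
Proof.
move=> iI jI e; case: (ltngtP i j) => [ij|ji|/val_inj //].
  by have := pos_mono iI jI ij; rewrite e ltnn.
by have := pos_mono jI iI ji; rewrite e ltnn.
Qed.

Lemma pos_surj (I : {set 'I_n}) (b : nat) : (b < #|I|)%N -> exists2 j, j \in I & pos I j = b.
Proof.
move=> bI.
have cI : (#|I| <= n)%N by have := max_card (mem I); rewrite card_ord.
pose f (j : 'I_n) : 'I_n.+1 := inord (pos I j).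
have fK j : j \in I -> (val (f j) = pos I j).
  move=> jI; rewrite /f /= inordK //; apply: leq_trans (pos_lt jI) _; exact: leqW.
have inj : {in I &, injective f}.
  by move=> i j iI jI e; apply: (pos_inj iI jI); rewrite -fK // -(fK j) // e.
have E : f @: I = [set c : 'I_n.+1 | (c < #|I|)%N].
  apply/eqP; rewrite eqEcard card_in_imset // (card_lt (k := n.+1)) ?leqW // leqnn andbT.
  by apply/subsetP => c /imsetP [j jI ->]; rewrite inE fK // pos_lt.
have : (inord b : 'I_n.+1) \in f @: I.
  by rewrite E inE inordK // ltnS (leq_trans (ltnW bI)).
case/imsetP => j jI e; exists j => //.
by rewrite -fK // -e /= inordK // ltnS (leq_trans (ltnW bI)).
Qed.

Lemma pf_lamcha (S T : {set 'I_n}) : pf (fun g : 'M[F]_n => lamcha g S T).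
Proof.
apply: (pf_ext (f2 := fun g : 'M[F]_n => if #|S| == #|T| then
   \det (\matrix_(a < #|T|, b < #|T|) \sum_(j in S | pos S j == b)
          \sum_(i in T | pos T i == a) g j i) else 0)).
  move=> g; rewrite /lamcha /wedge ffunE; case: ifP => // _.
  congr (\det _); apply/matrixP => a b; rewrite !mxE; apply: eq_bigr => j _.
  rewrite mxE; apply: eq_bigr => i _; by rewrite mxE.
case: (#|S| == #|T|); last exact: pf_const.
apply: pf_det => a b.
apply: (pf_ext (f2 := fun g : 'M[F]_n => \sum_(j in S | pos S j == b)
          \sum_(i in T | pos T i == a) g j i)); first by move=> g; rewrite mxE.
apply: pf_sum => j; apply: pf_sum => i; exact: pf_entry.
Qed.

Lemma witness (I : {set 'I_n}) m : #|I| = m -> (m <= n)%N ->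
  exists g0 : 'M[F]_n, forall S, lamcha g0 S [set i : 'I_n | (i < m)%N] = if S == I then 1 else 0.
Proof.
move=> cI mn.
set T := [set i : 'I_n | (i < m)%N].
have cT : #|T| = m by rewrite card_lt.
pose g0 : 'M[F]_n := \matrix_(i, k) (if (i \in I) && (pos I i == k) then 1 else 0).
exists g0.
have Hsel : forall (a : 'I_#|T|) j, sel T g0^T a j = if (j \in I) && (pos I j == a) then 1 else 0.
  move=> a j; rewrite /sel mxE.
  have am : (a < m)%N by rewrite -cT ltn_ord.
  pose i0 : 'I_n := Ordinal (leq_trans am mn).
  rewrite (eq_bigl (pred1 i0)) ?big_pred1_eq ?mxE //.
  move=> i /=; rewrite inE; apply/andP/eqP => [[im /eqP pa] | ->].
    by apply: val_inj; rewrite /= -pa pos_Tm.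
  by split => //; rewrite pos_Tm.
move=> S; rewrite /lamcha /wedge ffunE.
case: (eqVneq S I) => [-> | nSI].
  have -> : #|I| == #|T| by rewrite cI cT.
  rewrite (_ : \matrix_(_, _) _ = 1%:M) ?det1 //.
  apply/matrixP => a b; rewrite !mxE.
  have bI : (b < #|I|)%N by rewrite cI -cT ltn_ord.
  have [j0 j0I pj0] := pos_surj bI.
  rewrite (eq_bigl (pred1 j0)) ?big_pred1_eq.
    rewrite Hsel j0I pj0 /=; case: eqP => [/val_inj ->|ne]; first by rewrite eqxx.
    by case: eqP => // e; case: ne; rewrite e.
  move=> j /=; apply/andP/eqP => [[jI /eqP pj] | ->]; last by rewrite j0I pj0.
  by apply: (pos_inj jI j0I); rewrite pj pj0.
case: eqP => // cS.
have : ~~ (I \subset S).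
  by apply: contra nSI => sIS; rewrite eq_sym eqEcard sIS /= cS cT cI leqnn.
case/subsetPn => i iI niS.
have pi : (pos I i < #|T|)%N by rewrite cT -cI pos_lt.
rewrite (expand_det_row _ (Ordinal pi)) big1 // => b _.
rewrite mxE big1 ?mul0r // => j /andP [jS _].
rewrite Hsel; case: andP => // [[jI /eqP pj]].
have eji : j = i by apply: (pos_inj jI iI); rewrite pj.
by move: niS; rewrite -eji jS.
Qed.
End PF.

Lemma degs_bound n nu x : x \in degs n nu -> (1 <= x <= n)%N.
Proof.
case/flattenP => s /mapP [j jI ->]; rewrite mem_nseq => /andP [_ /eqP ->].
by rewrite mem_iota add1n ltnS in jI.
Qed.

Lemma rnu_prod (F : numClosedFieldType) n nu (B : nat -> Op F n)
  (x : 'I_(Nf n nu) -> {set 'I_n} -> F) :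
  rnu B [ffun I : {ffun 'I_(Nf n nu) -> {set 'I_n}} => \prod_(k < Nf n nu) x k (I k)] =
  [ffun J : {ffun 'I_(Nf n nu) -> {set 'I_n}} =>
     \prod_(k < Nf n nu) \sum_(S : {set 'I_n}) B (nth 0%N (degs n nu) k) (J k) S * x k S].
Proof.
apply/ffunP => J; rewrite !ffunE bigA_distr_bigA; apply: eq_bigr => I _.
by rewrite ffunE big_split.
Qed.

Theorem corollary2p15 (F : numClosedFieldType) (n : nat) (nu : nat -> nat)
    (A : nat -> Op F n) :
  signature n nu ->
  nondeg_hinge_tuple A ->
  exists h : Tens F n nu, inH h /\ rnu A h != 0.
Proof.
move=> _ [Ps [_ Hnd]].
have Hex : forall m, (m <= n)%N -> exists J I : {set 'I_n}, (#|I| == m) && (A m J I != 0).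
  move=> m mn; have [j [_ [L [_ [v [vm Lv]] [c c0 HA]]]]] := Hnd m mn.
  have [J HJ] : exists J, applyOp L v J != 0.
    case: (pickP (fun J => applyOp L v J != 0)) => [J HJ|H0]; first by exists J.
    exfalso; move/eqP: Lv; apply; apply/ffunP => J; rewrite [RHS]ffunE; exact/eqP/negbFE/H0.
  have AJ : applyOp (A m) v J != 0 by rewrite HA // ffunE mulf_neq0.
  move: AJ; rewrite ffunE => AJ.
  case: (pickP (fun I => A m J I * v I != 0)) => [I HI|H0]; last first.
    by case/eqP: AJ; apply: big1 => I _; apply/eqP; move: (H0 I) => /negbFE.
  exists J, I; move: HI; rewrite mulf_eq0 negb_or => /andP [-> vI]; rewrite andbT.
  by apply: contraLR vI => cI; rewrite negbK vm.
pose Jm m := odflt set0 [pick J | [exists I : {set 'I_n}, (#|I| == m) && (A m J I != 0)]].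
have HJ : forall m, (m <= n)%N -> exists I : {set 'I_n}, #|I| = m /\ A m (Jm m) I != 0.
  move=> m mn; rewrite /Jm; case: pickP => [J /existsP [I /andP [/eqP cI AI]]|H0].
    by exists I.
  have [J [I HI]] := Hex m mn.
  by move: (H0 J) => /existsP []; exists I.
pose phi m (g : 'M[F]_n) := \sum_(S : {set 'I_n}) A m (Jm m) S * lamcha g S [set i : 'I_n | (i < m)%N].
pose fs i g := if i == 0%N then \det g else phi i g.
have [g Hg] : exists g, forall i, (i < n.+1)%N -> fs i g != 0.
  apply: pf_all => i iN; rewrite /fs; case: eqP => [_|i0].
    split; first by apply: pf_det => a b; exact: pf_entry.
    by exists 1; rewrite det1 oner_eq0.
  split.
    by apply: pf_sum => S; apply: pf_mul; [exact: pf_const | exact: pf_lamcha].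
  have [I [cI AI]] := HJ i iN.
  have [g0 Hg0] := @witness F _ _ _ cI iN.
  exists g0; rewrite /phi (bigD1 I) //= Hg0 eqxx mulr1 big1 ?addr0 //.
  by move=> S /negbTE nSI; rewrite Hg0 nSI mulr0.
pose T k := [set i : 'I_n | (i < nth 0%N (degs n nu) k)%N].
exists (rnu (fun _ => lamcha g) (Xi F n nu)); split.
  exists [:: (1, g)]; split.
    move=> p; rewrite inE => /eqP -> /=.
    by rewrite unitmxE unitfE; exact: (Hg 0%N).
  by rewrite big_seq1; apply/ffunP => J; rewrite [RHS]ffunE mul1r.
rewrite /Xi (rnu_prod (fun _ => lamcha g) (fun k S => if S == T k then 1 else 0)).
rewrite (rnu_prod A (fun k S' => \sum_(S : {set 'I_n}) lamcha g S' S * (if S == T k then 1 else 0))).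
apply/eqP => /ffunP /(_ [ffun k : 'I_(Nf n nu) => Jm (nth 0%N (degs n nu) k)]).
rewrite [RHS]ffunE ffunE => /eqP /prodf_eq0 [k _].
rewrite ffunE.
have /andP [d1 dn] := degs_bound (mem_nth 0%N (ltn_ord k)).
have := Hg (nth 0%N (degs n nu) k) dn.
rewrite /fs; case: (eqVneq (nth 0%N (degs n nu) k) 0%N) => [d0|_]; first by rewrite d0 in d1.
move=> H /eqP E; move/eqP: H; apply; rewrite -E /phi; apply: eq_bigr => S _; congr (_ * _).
rewrite (bigD1 (T k)) //= eqxx mulr1 big1 ?addr0 //.
by move=> S' /negbTE ->; rewrite mulr0.
Qed.
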